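(* Let $R$ be any ring and let $x,y\in R$ satisfy $x^2=0$, $y^2=0$, $x\neq 0$, $y\neq 0$. If $x\circ y=x+y-xy$ is nilpotent, then $xy$ is nilpotent.
   Context: Rings are associative and not necessarily unital. *)

(* Defs.v *)
From mathcomp Require Import all_boot all_algebra.
Set Implicit Arguments. Unset Strict Implicit. Unset Printing Implicit Defensive.
Import GRing.Theory.
Local Open Scope ring_scope.

Definition rng_axioms (V : zmodType) (mul : V -> V -> V) : Prop :=
  [/\ forall a b c, mul a (mul b c) = mul (mul a b) c,
      forall a b c, mul a (b + c) = mul a b + mul a c &
      forall a b c, mul (a + b) c = mul a c + mul b c].

(* rpow mul n a = a * a * ... * a  with n+1 factors (no unit needed). *)
Fixpoint rpow (V : zmodType) (mul : V -> V -> V) (n : nat) (a : V) : V :=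
  match n with
  | O => a
  | S m => mul a (rpow mul m a)
  end.

Definition rnilpotent (V : zmodType) (mul : V -> V -> V) (a : V) : Prop :=
  exists n : nat, rpow mul n a = 0.

Definition circ (V : zmodType) (mul : V -> V -> V) (x y : V) : V :=
  x + y - mul x y.

(* Main.v *)
Require Import Defs.
From mathcomp Require Import all_boot all_algebra.
From mathcomp Require Import zify.
Local Open Scope ring_scope.
Import GRing.Theory.

Theorem lemma2p2 (V : zmodType) (mul : V -> V -> V) (Hring : rng_axioms mul)
  (x y : V) (hx2 : mul x x = 0) (hy2 : mul y y = 0) (hx : x <> 0) (hy : y <> 0) :
  rnilpotent mul (circ mul x y) -> rnilpotent mul (mul x y).
Proof.
case: Hring => mA mDr mDl.
have m0l : forall v, mul 0 v = 0.
  by move=> v; apply: (addrI (mul 0 v)); rewrite -mDl !addr0.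
have m0r : forall v, mul v 0 = 0.
  by move=> v; apply: (addrI (mul v 0)); rewrite -mDr !addr0.
have mNl : forall u v, mul (- u) v = - mul u v.
  by move=> u v; apply: (addrI (mul u v)); rewrite -mDl !subrr m0l.
have mNr : forall u v, mul u (- v) = - mul u v.
  by move=> u v; apply: (addrI (mul u v)); rewrite -mDr !subrr m0r.
set z := circ mul x y; set a := mul x y.
case=> n Hn.
have Zm : forall m, (n <= m)%N -> rpow mul m z = 0.
  move=> m; elim: m => [|m IH]; first by rewrite leqn0 => /eqP <-.
  rewrite leq_eqVlt => /orP [/eqP <- // | ]; rewrite ltnS => /IH /= ->.
  by rewrite m0r.
have xz : mul x z = a.
  by rewrite /z /circ mDr mNr mDr hx2 mA hx2 m0l add0r subr0.
have az : mul a z = mul a x - mul a a.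
  have ay : mul a y = 0 by rewrite /a -mA hy2 m0r.
  by rewrite /z /circ mDr mNr mDr ay addr0.
pose d m := mul x (rpow mul m z).
have rec : forall m, d m.+2 = - mul a (d m.+1) + mul a (d m).
  move=> m; rewrite /d /=; set w := rpow mul m z.
  rewrite (mA x z) xz (mA a z) az mDl mNl (mA x z) xz.
  by rewrite -!mA addrC.
have P : forall j m, (n <= m + j)%N -> iter j (mul a) (d m) = 0.
  elim=> [|j IH] m H.
    by rewrite /= /d Zm ?m0r // -(addn0 m).
  rewrite iterSr.
  have -> : mul a (d m) = d m.+2 + mul a (d m.+1) by rewrite rec addrAC addNr add0r.
  have Lad : forall k u v, iter k (mul a) (u + v) = iter k (mul a) u + iter k (mul a) v.
    by elim=> [|k IHk] u v //=; rewrite IHk mDr.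
  rewrite Lad (IH m.+2); last by lia.
  rewrite -iterSr iterS.
  have -> : iter j (mul a) (d m.+1) = 0 by apply: IH; lia.
  by rewrite m0r add0r.
exists n.
have -> : rpow mul n a = iter n (mul a) (d 0) by rewrite /d /= xz; elim: n {Zm P Hn} => //= k ->.
by apply: P; rewrite add0n.
Qed.
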